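(* Let $k\geq 2$. For every unitary $d\times d$ matrix $U$ with entries in $\mathbb{Z}[1/2,\zeta_{2^k}]$, write $U=A+B\zeta_{2^k}$ where $A,B$ are (uniquely determined) $d\times d$ matrices with entries in $\mathbb{Z}[1/2,\zeta_{2^{k-1}}]$, and set $\phi_k(U)=A\otimes I_2+B\otimes\Lambda_k$. Then $\phi_k$ is a well-defined function from the set of unitary matrices over $\mathbb{Z}[1/2,\zeta_{2^k}]$ to the set of unitary matrices over $\mathbb{Z}[1/2,\zeta_{2^{k-1}}]$, $\phi_k(U)$ has dimension $2d$, and for every $\ket{u}\in\mathbb{C}^d$, $$\phi_k(U)(\ket{u}\otimes\ket{\lambda_k})=(U\ket{u})\otimes\ket{\lambda_k}.$$ That is, $(\phi_k,\ket{\lambda_k})$ is a 2-dimensional catalytic embedding of the unitaries over $\mathbb{Z}[1/2,\zeta_{2^k}]$ into the unitaries over $\mathbb{Z}[1/2,\zeta_{2^{k-1}}]$.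
   Context: $\zeta_n=e^{2\pi i/n}$; $\mathbb{Z}[1/2,\zeta_n]$ is the smallest subring of $\mathbb{C}$ containing $1/2$ and $\zeta_n$. $\Lambda_k=\begin{bmatrix}0&1\\ \zeta_{2^{k-1}}&0\end{bmatrix}$ and $\ket{\lambda_k}=\frac{1}{\sqrt2}\begin{bmatrix}1\\ \zeta_{2^k}\end{bmatrix}$. For collections of unitaries $\mathcal{U},\mathcal{V}$, an $\ell$-dimensional catalytic embedding of $\mathcal{U}$ into $\mathcal{V}$ is a pair $(\phi,\ket{\lambda})$ with $\phi:\mathcal{U}\to\mathcal{V}$ and $\ket{\lambda}\in\mathbb{C}^\ell$ a state, such that whenever $U\in\mathcal{U}$ has dimension $d$, $\phi(U)$ has dimension $d\ell$ and $\phi(U)(\ket{u}\otimes\ket{\lambda})=(U\ket{u})\otimes\ket{\lambda}$ for all $\ket{u}\in\mathbb{C}^d$. *)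

(* Defs.v *)
From HB Require Import structures.
From mathcomp Require Import all_boot all_order all_algebra.
From mathcomp Require Import reals trigo.
From mathcomp.real_closed Require Import complex mxtens.

Set Implicit Arguments.
Unset Strict Implicit.
Unset Printing Implicit Defensive.

Import Order.TTheory GRing.Theory Num.Theory.
Local Open Scope ring_scope.

Section Defs.
Variable R : realType.

(* zeta_n = e^{2 pi i / n} = cos(2pi/n) + i sin(2pi/n)  (meaningful for n >= 1) *)
Definition zeta (n : nat) : R[i] :=
  Complex (cos (2 * pi / n%:R)) (sin (2 * pi / n%:R)).

(* Z[1/2, z] : the smallest subring of C containing 1/2 and z, i.e. x lies in
   every subring S of C with 1/2 \in S and z \in S. *)
Definition subring_of (S : R[i] -> Prop) : Prop :=
  [/\ S 1, (forall x y, S x -> S y -> S (x - y)) & (forall x y, S x -> S y -> S (x * y))].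

Definition in_Zhalf (z x : R[i]) : Prop :=
  forall S : R[i] -> Prop, subring_of S -> S (2%:R^-1) -> S z -> S x.

Definition mx_over (z : R[i]) (m n : nat) (M : 'M[R[i]]_(m, n)) : Prop :=
  forall i j, in_Zhalf z (M i j).

Definition adjmx (m n : nat) (M : 'M[R[i]]_(m, n)) : 'M[R[i]]_(n, m) :=
  (map_mx (@conjc R) M)^T.

Definition unitary (n : nat) (M : 'M[R[i]]_n) : Prop :=
  M *m adjmx M = 1%:M /\ adjmx M *m M = 1%:M.

(* Lambda_k = [[0, 1], [zeta_{2^{k-1}}, 0]] *)
Definition Lambda (k : nat) : 'M[R[i]]_2 :=
  \matrix_(i < 2, j < 2)
    (if (i : nat) == j then 0
     else if (i : nat) == 0%N then 1 else zeta (2 ^ (k - 1))).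

Definition lambda (k : nat) : 'cV[R[i]]_2 :=
  \col_(i < 2) (real_complex R (Num.sqrt (2 : R))^-1 *
               (if (i : nat) == 0%N then 1 else zeta (2 ^ k))).

End Defs.

(* Main.v *)
Require Import Defs.
From HB Require Import structures.
From mathcomp Require Import all_boot all_order all_algebra all_field.
From mathcomp Require Import reals trigo.
From mathcomp.real_closed Require Import complex mxtens.
From mathcomp Require Import ring lra.
From Stdlib Require Import ClassicalEpsilon.
Import Order.TTheory GRing.Theory Num.Theory.
Local Open Scope ring_scope.
Set Implicit Arguments. Unset Strict Implicit.

Lemma prim_of_half (F : idomainType) (j : nat) (x : F) :
  (2 : F) != 0 -> x ^+ (2 ^ j) = -1 -> (2 ^ j.+1).-primitive_root x.
Proof.
move=> h2 hx.
have hx1 : x ^+ (2 ^ j.+1) = 1 by rewrite expnSr exprM hx sqrrN expr1n.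
have [m pm dm] := prim_order_exists (expn_gt0 2 j.+1) hx1.
case/(dvdn_pfactor _ _ (isT : prime 2)): dm => e he em; subst m.
move: he; rewrite leq_eqVlt => /orP [/eqP ee|]; first by rewrite -ee.
rewrite ltnS => he; exfalso.
have : x ^+ (2 ^ j) = 1.
  have /dvdnP [c ->] : (2 ^ e %| 2 ^ j)%N by apply: dvdn_exp2l.
  by rewrite mulnC exprM (prim_expr_order pm) expr1n.
rewrite hx => /eqP; rewrite -subr_eq0 -opprD oppr_eq0 (addrC 1).
by rewrite (negbTE h2).
Qed.

Lemma key_rat (F : numFieldType) (j : nat) (z : F) (q : {poly rat}) :
  (0 < j)%N -> z ^+ (2 ^ j) = -1 ->
  root (map_poly ratr q) z -> root (map_poly ratr q) (- z).
Proof.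
move=> hj hz hq.
pose p : {poly rat} := 'X^(2 ^ j) + 1.
have mapp (G : numFieldType) : map_poly (ratr : rat -> G) p = 'X^(2 ^ j) + 1.
  by rewrite rmorphD /= map_polyXn rmorph1.
have p_monic : p \is monic by rewrite monicE lead_coefDl ?lead_coefXn // size_polyXn size_poly1 ltnS expn_gt0.
have sizep : size p = (2 ^ j).+1 by rewrite size_addl ?size_polyXn // size_poly1 ltnS expn_gt0.
have pdq : p %| q.
  pose g := gcdp p q.
  have rg : root (map_poly ratr g) z.
    rewrite gcdp_map root_gcd hq andbT mapp /root hornerD hornerXn hz hornerC.
    by rewrite addNr.
  have sg : size g != 1%N.
    apply/negP => /eqP sg1.
    have [c gc] : exists c, g = c%:P by exists g`_0; apply/size1_polyC; rewrite sg1.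
    move: rg; rewrite gc map_polyC /root hornerC fmorph_eq0 => /eqP c0.
    by move: sg1; rewrite gc c0 size_poly0.
  have : size (map_poly (ratr : rat -> algC) g) != 1%N by rewrite size_map_poly.
  case/closed_rootP => x rx.
  have rpx : root (map_poly (ratr : rat -> algC) p) x.
    by apply: root_dvdp rx; rewrite dvdp_map dvdp_gcdl.
  have hx : x ^+ (2 ^ j) = -1.
    by move: rpx; rewrite mapp /root hornerD hornerXn hornerC addr_eq0 => /eqP.
  have px' : (2 ^ j.+1).-primitive_root x.
    apply: prim_of_half hx; by rewrite pnatr_eq0.
  have [pm [Dpm pm_monic] pmP] := minCpolyP x.
  have spm : size pm = (2 ^ j).+1.
    rewrite -(size_map_poly (ratr : rat -> algC)) -Dpm (minCpoly_cyclotomic px').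
    by rewrite size_cyclotomic totient_pfactor // mul1n.
  have pm_p : pm %| p by rewrite -pmP.
  have pmE : pm = p.
    by apply/eqP; rewrite -eqp_monic // -dvdp_size_eqp // spm sizep.
  have : pm %| g by rewrite -pmP.
  by rewrite pmE => /dvdp_trans; apply; rewrite dvdp_gcdr.
case/dvdpP: pdq => s ->.
rewrite rmorphM /= /root hornerM mapp hornerD hornerXn hornerC.
have ev : ~~ odd (2 ^ j) by rewrite oddX /= negb_or andbT -lt0n.
rewrite exprNn -signr_odd (negbTE ev) expr0 mul1r hz addNr mulr0 //.
Qed.
Section T.
Variable R : realType.
Definition cis (t : R) : R[i] := Complex (cos t) (sin t).
Lemma cisD a b : cis (a + b) = cis a * cis b.
Proof. by rewrite /cis cosD sinD; apply/eqP; rewrite eq_complex /= (addrC (sin a * _)) !eqxx. Qed.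
Lemma cis0 : cis 0 = 1.
Proof. by rewrite /cis cos0 sin0. Qed.
Lemma cisX t m : cis t ^+ m = cis (t *+ m).
Proof. elim: m => [|m IH]; first by rewrite expr0 mulr0n cis0.
by rewrite exprS IH mulrS cisD. Qed.
Lemma cisJ t : (cis t)^*%C = cis (- t).
Proof. by rewrite /cis cosN sinN. Qed.
Lemma cisJM t : cis t * (cis t)^*%C = 1.
Proof. by rewrite cisJ -cisD subrr cis0. Qed.
Lemma zetaE n : zeta R n = cis (2 * pi / n%:R).
Proof. by []. Qed.
Lemma zeta_sq k : (1 <= k)%N -> zeta R (2 ^ k) ^+ 2 = zeta R (2 ^ (k - 1)).
Proof.
move=> hk; rewrite !zetaE cisX; congr cis.
have -> : (2 ^ k = 2 ^ (k - 1) * 2)%N by rewrite -expnSr subn1 prednK.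
rewrite natrM mulr2n; have h : (2 ^ (k - 1))%:R != 0 :> R by rewrite pnatr_eq0 expn_eq0.
field. by rewrite h.
Qed.
Lemma zeta_half k : (1 <= k)%N -> zeta R (2 ^ k) ^+ (2 ^ (k - 1)) = -1.
Proof.
move=> hk; rewrite !zetaE cisX.
have -> : (2 ^ k = 2 ^ (k - 1) * 2)%N by rewrite -expnSr subn1 prednK.
have -> : 2 * pi / (2 ^ (k - 1) * 2)%:R *+ 2 ^ (k - 1) = pi :> R.
  rewrite -mulr_natr natrM; have h : (2 ^ (k - 1))%:R != 0 :> R by rewrite pnatr_eq0 expn_eq0.
  field. by rewrite h.
by rewrite /cis cospi sinpi; apply/eqP; rewrite eq_complex /= oppr0 !eqxx.
Qed.

Section Ring.
Variable c : R[i].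
Local Notation Z := (in_Zhalf c).
Lemma Z1 : Z 1. Proof. by move=> S [] . Qed.
Lemma ZB x y : Z x -> Z y -> Z (x - y).
Proof. by move=> hx hy S hS h2 hc; case: (hS) => _ hB _; apply: hB; [apply: hx|apply: hy]. Qed.
Lemma ZM x y : Z x -> Z y -> Z (x * y).
Proof. by move=> hx hy S hS h2 hc; case: (hS) => _ _ hM; apply: hM; [apply: hx|apply: hy]. Qed.
Lemma Zhalf : Z 2%:R^-1. Proof. by move=> S. Qed.
Lemma Zgen : Z c. Proof. by move=> S. Qed.
Lemma Z0 : Z 0. Proof. by rewrite -(subrr 1); apply: ZB; apply: Z1. Qed.
Lemma ZN x : Z x -> Z (- x). Proof. by move=> h; rewrite -sub0r; apply: ZB => //; apply: Z0. Qed.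
Lemma ZD x y : Z x -> Z y -> Z (x + y).
Proof. by move=> hx hy; rewrite -(opprK y); apply: ZB => //; apply: ZN. Qed.
Lemma Znat n : Z n%:R.
Proof. elim: n => [|n IH]; first exact: Z0. by rewrite mulrS; apply: ZD => //; apply: Z1. Qed.
Lemma ZX x n : Z x -> Z (x ^+ n).
Proof. move=> h; elim: n => [|n IH]; first by rewrite expr0; apply: Z1. by rewrite exprS; apply: ZM. Qed.
Lemma Zsum (I : finType) (F : I -> R[i]) : (forall i, Z (F i)) -> Z (\sum_i F i).
Proof. move=> h; apply: (big_ind Z) => //; [exact: Z0| exact: ZD]. Qed.
End Ring.

Section Zeta.
Variable k : nat.
Hypothesis hk : (2 <= k)%N.
Local Notation z := (zeta R (2 ^ k)).
Local Notation w := (zeta R (2 ^ (k - 1))).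
Let hk1 : (1 <= k)%N. Proof. exact: ltnW. Qed.
Lemma zw : z * z = w. Proof. by rewrite -expr2 zeta_sq. Qed.
Lemma zJ : z * z^*%C = 1. Proof. by rewrite zetaE cisJM. Qed.
Lemma wJ : w * w^*%C = 1. Proof. by rewrite zetaE cisJM. Qed.
Lemma zN : z ^+ (2 ^ (k - 1)) = -1. Proof. exact: zeta_half. Qed.
Lemma zneq0 : z != 0.
Proof. by apply/eqP => h; move: zJ; rewrite h mul0r => /eqP; rewrite eq_sym oner_eq0. Qed.

Lemma Zw_Zz x : in_Zhalf w x -> in_Zhalf z x.
Proof.
move=> hx S hS h2 hz; apply: hx => //; rewrite -zw.
by case: hS => _ _ hM; apply: hM.
Qed.

Lemma decomp x : in_Zhalf z x -> exists ab : R[i] * R[i],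
  [/\ in_Zhalf w ab.1, in_Zhalf w ab.2 & x = ab.1 + z * ab.2].
Proof.
move=> hx; apply: (hx (fun y => exists ab : R[i] * R[i],
  [/\ in_Zhalf w ab.1, in_Zhalf w ab.2 & y = ab.1 + z * ab.2])).
- split.
  + by exists (1, 0); split; [exact: Z1|exact: Z0|rewrite mulr0 addr0].
  + move=> x1 y1 [[a b] [ha hb ->]] [[c d] [hc hd ->]].
    exists (a - c, b - d); split; [exact: ZB|exact: ZB|]; rewrite /=; ring.
  + move=> x1 y1 [[a b] [ha hb ->]] [[c d] [hc hd ->]].
    exists (a * c + w * (b * d), a * d + b * c); split => /=.
    * apply: ZD; first by apply: ZM.
      by apply: ZM; [exact: Zgen| exact: ZM].
    * by apply: ZD; apply: ZM.
    * rewrite -zw; ring.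
- by exists (2%:R^-1, 0); split; [exact: Zhalf|exact: Z0|rewrite mulr0 addr0].
- by exists (0, 1); split; [exact: Z0|exact: Z1|rewrite mulr1 add0r].
Qed.

Lemma wX1 : w ^+ (2 ^ (k - 1)) = 1.
Proof. by rewrite -zw exprMn zN mulrNN mulr1. Qed.

Lemma ZwJw : in_Zhalf w w^*%C.
Proof.
have -> : w^*%C = w ^+ (2 ^ (k - 1)).-1.
  have e : w ^+ (2 ^ (k - 1)) = w * w ^+ (2 ^ (k - 1)).-1 by rewrite -exprS prednK // expn_gt0.
  rewrite -[LHS]mulr1 -wX1 e mulrA (mulrC _ w) wJ mul1r.
  by [].
by apply: ZX; apply: Zgen.
Qed.

Lemma ZwJ x : in_Zhalf w x -> in_Zhalf w x^*%C.
Proof.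
move=> hx; apply: (hx (fun y => in_Zhalf w y^*%C)).
- split.
  + by rewrite rmorph1; apply: Z1.
  + by move=> a b ha hb; rewrite rmorphB; apply: ZB.
  + by move=> a b ha hb; rewrite rmorphM; apply: ZM.
- by rewrite conjc_inv conjc_nat; apply: Zhalf.
- exact: ZwJw.
Qed.

Lemma ratrep x : in_Zhalf w x -> exists r : {poly rat}, x = (map_poly ratr r).[w].
Proof.
move=> hx; apply: (hx (fun y => exists r : {poly rat}, y = (map_poly ratr r).[w])).
- split.
  + by exists 1; rewrite rmorph1 hornerC.
  + by move=> a b [r ->] [s ->]; exists (r - s); rewrite rmorphB hornerD hornerN.
  + by move=> a b [r ->] [s ->]; exists (r * s); rewrite rmorphM hornerM.
- exists (2%:R^-1)%:P; rewrite map_polyC hornerC.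
  apply: (@mulfI _ 2%:R); first by rewrite pnatr_eq0.
  rewrite mulfV ?pnatr_eq0 // -[X in X * _](ratr_nat _ 2) -rmorphM /= mulfV ?pnatr_eq0 // rmorph1 //.
- by exists 'X; rewrite map_polyX hornerX.
Qed.

Lemma uniq0 a b : in_Zhalf w a -> in_Zhalf w b -> a + z * b = 0 -> a = 0 /\ b = 0.
Proof.
move=> ha hb hab.
have [ra ea] := ratrep ha; have [rb eb] := ratrep hb.
pose q : {poly rat} := ra \Po 'X^2 + 'X * (rb \Po 'X^2).
have ev y : (map_poly (ratr : rat -> R[i]) q).[y] =
    (map_poly ratr ra).[y ^+ 2] + y * (map_poly ratr rb).[y ^+ 2].
  by rewrite rmorphD rmorphM /= !map_comp_poly map_polyX map_polyXn hornerD hornerM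
    !horner_comp hornerX hornerXn.
have hkk : (0 < k - 1)%N by rewrite subn_gt0.
have := key_rat (q:=q) hkk zN.
rewrite /root !ev sqrrN expr2 zw -ea -eb hab eqxx => /(_ isT) /eqP h2.
have a0 : a = 0.
  have : (a + z * b) + (a + - z * b) = 2%:R * a by ring.
  rewrite hab h2 addr0 => /esym /eqP; rewrite mulf_eq0 pnatr_eq0 /= => /eqP //.
split => //; move: hab; rewrite a0 add0r => /eqP; rewrite mulf_eq0 (negbTE zneq0) /=.
by move/eqP.
Qed.

Local Notation W := (mx_over w).
Lemma mxo0 m n : mx_over w (0 : 'M_(m, n)).
Proof. by move=> i j; rewrite mxE; apply: Z0. Qed.
Lemma mxo1 n : mx_over w (1%:M : 'M_n).
Proof. by move=> i j; rewrite mxE; apply: Znat. Qed.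
Lemma mxoD m n (A B : 'M_(m, n)) : mx_over w A -> mx_over w B -> mx_over w (A + B).
Proof. by move=> hA hB i j; rewrite mxE; apply: ZD. Qed.
Lemma mxoB m n (A B : 'M_(m, n)) : mx_over w A -> mx_over w B -> mx_over w (A - B).
Proof. by move=> hA hB i j; rewrite !mxE; apply: ZB. Qed.
Lemma mxoM m n p (A : 'M_(m, n)) (B : 'M_(n, p)) :
  mx_over w A -> mx_over w B -> mx_over w (A *m B).
Proof. by move=> hA hB i j; rewrite mxE; apply: Zsum => l; apply: ZM. Qed.
Lemma mxoZ m n c (A : 'M_(m, n)) : in_Zhalf w c -> mx_over w A -> mx_over w (c *: A).
Proof. by move=> hc hA i j; rewrite mxE; apply: ZM. Qed.
Lemma mxoJ m n (A : 'M_(m, n)) : mx_over w A -> mx_over w (adjmx A).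
Proof. by move=> hA i j; rewrite !mxE; apply: ZwJ. Qed.

Lemma uniq_mx m n (X Y : 'M_(m, n)) : mx_over w X -> mx_over w Y ->
  X + z *: Y = 0 -> X = 0 /\ Y = 0.
Proof.
move=> hX hY e.
have h i j : X i j = 0 /\ Y i j = 0.
  apply: uniq0 => //; move/matrixP: e => /(_ i j); rewrite !mxE.
  by [].
by split; apply/matrixP => i j; rewrite mxE; case: (h i j).
Qed.

Lemma uniq_mx2 m n (X1 Y1 X2 Y2 : 'M_(m, n)) : mx_over w X1 -> mx_over w Y1 ->
  mx_over w X2 -> mx_over w Y2 ->
  X1 + z *: Y1 = X2 + z *: Y2 -> X1 = X2 /\ Y1 = Y2.
Proof.
move=> h1 h2 h3 h4 e.
have [] := @uniq_mx _ _ (X1 - X2) (Y1 - Y2) (mxoB h1 h3) (mxoB h2 h4).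
  by rewrite scalerBr addrACA e addrACA !subrr addr0.
by move=> /eqP; rewrite subr_eq0 => /eqP -> /eqP; rewrite subr_eq0 => /eqP ->.
Qed.
End Zeta.

Section Tens.
Variable F : comNzRingType.
Lemma tensDl m n p q (A1 A2 : 'M[F]_(m, n)) (B : 'M[F]_(p, q)) :
  (A1 + A2) *t B = A1 *t B + A2 *t B.
Proof. by apply/matrixP => i j; rewrite !mxE mulrDl. Qed.
Lemma tensDr m n p q (A : 'M[F]_(m, n)) (B1 B2 : 'M[F]_(p, q)) :
  A *t (B1 + B2) = A *t B1 + A *t B2.
Proof. by apply/matrixP => i j; rewrite !mxE mulrDr. Qed.
Lemma tensZl m n p q c (A : 'M[F]_(m, n)) (B : 'M[F]_(p, q)) :
  (c *: A) *t B = c *: (A *t B).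
Proof. by apply/matrixP => i j; rewrite !mxE mulrA. Qed.
Lemma tensZr m n p q c (A : 'M[F]_(m, n)) (B : 'M[F]_(p, q)) :
  A *t (c *: B) = c *: (A *t B).
Proof. by apply/matrixP => i j; rewrite !mxE mulrCA. Qed.
Lemma tens11 m n : (1%:M : 'M[F]_m) *t (1%:M : 'M[F]_n) = 1%:M.
Proof.
apply/matrixP => i j.
case: (mxtens_indexP i) => i1 i2; case: (mxtens_indexP j) => j1 j2.
rewrite tensmxE !mxE (inj_eq (can_inj (@mxtens_indexK m n))) xpair_eqE.
by case: (i1 == j1); case: (i2 == j2); rewrite ?mulr1 ?mulr0 ?mul0r.
Qed.
End Tens.

Section Adj.
Lemma adjD m n (A B : 'M[R[i]]_(m, n)) : adjmx (A + B) = adjmx A + adjmx B.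
Proof. by apply/matrixP => i j; rewrite !mxE rmorphD. Qed.
Lemma adjZ m n c (A : 'M[R[i]]_(m, n)) : adjmx (c *: A) = c^*%C *: adjmx A.
Proof. by apply/matrixP => i j; rewrite !mxE rmorphM. Qed.
Lemma adjM m n p (A : 'M[R[i]]_(m, n)) (B : 'M[R[i]]_(n, p)) :
  adjmx (A *m B) = adjmx B *m adjmx A.
Proof. by rewrite /adjmx map_mxM trmx_mul. Qed.
Lemma adjT m n p q (A : 'M[R[i]]_(m, n)) (B : 'M[R[i]]_(p, q)) :
  adjmx (A *t B) = adjmx A *t adjmx B.
Proof. by rewrite /adjmx map_mxT trmx_tens. Qed.
Lemma adj1 n : adjmx (1%:M : 'M[R[i]]_n) = 1%:M.
Proof. by apply/matrixP => i j; rewrite !mxE conjc_nat eq_sym. Qed.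
End Adj.

Section Lam.
Variable k : nat.
Hypothesis hk : (2 <= k)%N.
Local Notation z := (zeta R (2 ^ k)).
Local Notation w := (zeta R (2 ^ (k - 1))).
Local Notation L := (Lambda R k).
Lemma LLJ : L *m adjmx L = 1%:M.
Proof.
apply/matrixP => i j; rewrite !mxE !big_ord_recl big_ord0 !mxE.
rewrite !(fun_if (@conjc _)) rmorph0 rmorph1.
move: (wJ k); set wc := (w^*)%C; move: wc => wc hw.
case: i => [[|[|i]]] hi; case: j => [[|[|j]]] hj //=.
all: by rewrite ?mul0r ?mulr0 ?mul1r ?addr0 ?add0r.
Qed.
Lemma LJL : adjmx L *m L = 1%:M.
Proof.
apply/matrixP => i j; rewrite !mxE !big_ord_recl big_ord0 !mxE.
rewrite !(fun_if (@conjc _)) rmorph0 rmorph1.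
move: (wJ k); set wc := (w^*)%C; move: wc => wc hw.
case: i => [[|[|i]]] hi; case: j => [[|[|j]]] hj //=.
all: by rewrite ?mul0r ?mulr0 ?mul1r ?addr0 ?add0r // mulrC.
Qed.
Lemma LJ : adjmx L = w^*%C *: L.
Proof.
apply/matrixP => i j; rewrite !mxE.
rewrite !(fun_if (@conjc _)) rmorph0 rmorph1.
move: (wJ k); set wc := (w^*)%C; move: wc => wc hw.
case: i => [[|[|i]]] hi; case: j => [[|[|j]]] hj //=.
all: by rewrite ?mul0r ?mulr0 ?mul1r ?mulr1 ?addr0 ?add0r // mulrC.
Qed.
Lemma Llam : L *m lambda R k = z *: lambda R k.
Proof.
apply/matrixP => i j; rewrite !mxE !big_ord_recl big_ord0 !mxE.
move: (zw hk); set s := real_complex R _ => hz.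
case: i => [[|[|i]]] hi //=.
  by rewrite mul0r add0r addr0 mul1r mulr1 mulrC.
by rewrite mul0r addr0 mulr1 -hz; ring.
Qed.
Lemma mxoL : mx_over w L.
Proof.
move=> i j; rewrite !mxE.
case: ifP => _; first exact: Z0.
case: ifP => _; [exact: Z1| exact: Zgen].
Qed.
End Lam.
End T.

Lemma perm4 (V : zmodType) (a b c d : V) : a + b + (c + d) = a + d + (b + c).
Proof. by rewrite [c + d]addrC addrACA. Qed.

Lemma mxoT (R : realType) (c : R[i]) m n p q (A : 'M[R[i]]_(m, n)) (B : 'M[R[i]]_(p, q)) :
  mx_over c A -> mx_over c B -> mx_over c (A *t B).
Proof. by move=> hA hB i j; rewrite mxE; apply: ZM. Qed.

Unset Implicit Arguments.

Theorem proposition1 (R : realType) (k : nat) (hk : (2 <= k)%N) (d : nat)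
    (U : 'M[R[i]]_d) :
  unitary U -> mx_over (zeta R (2 ^ k)) U ->
  (exists! AB : 'M[R[i]]_d * 'M[R[i]]_d,
      [/\ mx_over (zeta R (2 ^ (k - 1))) AB.1,
          mx_over (zeta R (2 ^ (k - 1))) AB.2
        & U = AB.1 + zeta R (2 ^ k) *: AB.2]) /\
  (forall A B : 'M[R[i]]_d,
      mx_over (zeta R (2 ^ (k - 1))) A -> mx_over (zeta R (2 ^ (k - 1))) B ->
      U = A + zeta R (2 ^ k) *: B ->
      let P : 'M[R[i]]_(d * 2) := A *t (1%:M : 'M[R[i]]_2) + B *t Lambda R k in
      [/\ unitary P,
          mx_over (zeta R (2 ^ (k - 1))) P
        & forall u : 'cV[R[i]]_d,
            P *m (u *t lambda R k) = (U *m u) *t lambda R k]).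
Proof.
move=> [UU UU'] hU.
have zJw : zeta R (2 ^ k) * (zeta R (2 ^ (k - 1)))^*%C = (zeta R (2 ^ k))^*%C.
  by rewrite -(zw _ hk) rmorphM mulrA zJ mul1r.
split.
  have hd i j := decomp hk (hU i j).
  pose f i j := proj1_sig (constructive_indefinite_description _ (hd i j)).
  have hf i j : [/\ in_Zhalf (zeta R (2 ^ (k - 1))) (f i j).1,
      in_Zhalf (zeta R (2 ^ (k - 1))) (f i j).2 & U i j = (f i j).1 + zeta R (2 ^ k) * (f i j).2].
    by rewrite /f; case: constructive_indefinite_description.
  have hA : mx_over (zeta R (2 ^ (k - 1))) (\matrix_(i, j) (f i j).1).
    by move=> i j; rewrite mxE; case: (hf i j).
  have hB : mx_over (zeta R (2 ^ (k - 1))) (\matrix_(i, j) (f i j).2).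
    by move=> i j; rewrite mxE; case: (hf i j).
  have eU : U = (\matrix_(i, j) (f i j).1) + zeta R (2 ^ k) *: (\matrix_(i, j) (f i j).2).
    by apply/matrixP => i j; rewrite !mxE; case: (hf i j).
  exists (\matrix_(i, j) (f i j).1, \matrix_(i, j) (f i j).2); split; first by split.
  move=> [A' B'] /= [hA' hB' e].
  by have [-> ->] := uniq_mx2 hk hA hB hA' hB' (etrans (esym eU) e).
move=> A B hA hB eU P.
set L := Lambda R k.
have hAJ := mxoJ hk hA; have hBJ := mxoJ hk hB.
have hwJ := ZwJw hk.
have E1 : U *m adjmx U = (A *m adjmx A + B *m adjmx B) +
    zeta R (2 ^ k) *: ((zeta R (2 ^ (k - 1)))^*%C *: (A *m adjmx B) + B *m adjmx A).
  rewrite eU adjD adjZ mulmxDl !mulmxDr -!scalemxAl -!scalemxAr scalerA zJ scale1r.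
  by rewrite scalerDr scalerA zJw perm4.
have E2 : adjmx U *m U = (adjmx A *m A + adjmx B *m B) +
    zeta R (2 ^ k) *: (adjmx A *m B + (zeta R (2 ^ (k - 1)))^*%C *: (adjmx B *m A)).
  rewrite eU adjD adjZ mulmxDl !mulmxDr -!scalemxAl -!scalemxAr scalerA mulrC zJ scale1r.
  by rewrite scalerDr scalerA zJw perm4.
have [X1 Y0] : (A *m adjmx A + B *m adjmx B) = 1%:M /\
    (zeta R (2 ^ (k - 1)))^*%C *: (A *m adjmx B) + B *m adjmx A = 0.
  apply: (uniq_mx2 hk); last by rewrite -E1 UU scaler0 addr0.
  - by apply: mxoD; apply: mxoM.
  - by apply: mxoD; [apply: mxoZ => //; apply: mxoM|apply: mxoM].
  - exact: mxo1.
  - exact: mxo0.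
have [X1' Y0'] : (adjmx A *m A + adjmx B *m B) = 1%:M /\
    adjmx A *m B + (zeta R (2 ^ (k - 1)))^*%C *: (adjmx B *m A) = 0.
  apply: (uniq_mx2 hk); last by rewrite -E2 UU' scaler0 addr0.
  - by apply: mxoD; apply: mxoM.
  - by apply: mxoD; [apply: mxoM|apply: mxoZ => //; apply: mxoM].
  - exact: mxo1.
  - exact: mxo0.
have adjP : adjmx P = adjmx A *t 1%:M + adjmx B *t adjmx L.
  by rewrite /P adjD !adjT adj1.
split.
- split.
  + rewrite adjP /P mulmxDl !mulmxDr !tensmx_mul !mulmx1 !mul1mx LLJ LJ tensZr -tensZl.
    have -> : A *m adjmx A *t 1%:M + ((zeta R (2 ^ (k - 1)))^*%C *: (A *m adjmx B)) *t L +
      (B *m adjmx A *t L + B *m adjmx B *t 1%:M) =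
      (A *m adjmx A + B *m adjmx B) *t 1%:M +
      ((zeta R (2 ^ (k - 1)))^*%C *: (A *m adjmx B) + B *m adjmx A) *t L.
      by rewrite !tensDl perm4.
    by rewrite X1 Y0 tens11 tens0mx addr0.
  + rewrite adjP /P mulmxDl !mulmxDr !tensmx_mul !mulmx1 !mul1mx LJL LJ tensZr -tensZl.
    have -> : adjmx A *m A *t 1%:M + adjmx A *m B *t L +
      (((zeta R (2 ^ (k - 1)))^*%C *: (adjmx B *m A)) *t L + adjmx B *m B *t 1%:M) =
      (adjmx A *m A + adjmx B *m B) *t 1%:M +
      (adjmx A *m B + (zeta R (2 ^ (k - 1)))^*%C *: (adjmx B *m A)) *t L.
      by rewrite !tensDl perm4.
    by rewrite X1' Y0' tens11 tens0mx addr0.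
- rewrite /P; apply: mxoD; apply: mxoT => //; [exact: mxo1|exact: mxoL].
- move=> u; rewrite /P mulmxDl !tensmx_mul mul1mx Llam // tensZr.
  by rewrite eU mulmxDl -scalemxAl tensDl tensZl.
Qed.
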